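(* Assume $q\equiv1\pmod 4$. Then $S^{(3)}(\beta)=0$ if and only if \[ \begin{cases} K(\chi)+\zeta_4K(\eta_{1/4}\chi)-K(\eta_{1/2}\chi)-\zeta_4K(\eta_{3/4}\chi)\equiv0 \pmod{8\mathcal{P}\,\mathbb{Z}[\zeta_{4k}]} & \text{if } q\equiv1\pmod 8,\\ K(\chi)-\zeta_4K(\eta_{1/4}\chi)-K(\eta_{1/2}\chi)+\zeta_4K(\eta_{3/4}\chi)\equiv0 \pmod{8\mathcal{P}\,\mathbb{Z}[\zeta_{4k}]} & \text{if } q\equiv5\pmod 8. \end{cases} \]
   Context: Let $p$ be an odd prime, $m\ge1$, $q=p^m$, $\alpha$ a primitive element of $\mathbb{F}_q$, and $T=q-1$. The binary SLCE sequence $(s_n)_{n\ge0}$ is defined as follows: $s_n=1$ if $\alpha^n+1$ is a nonzero non-square of $\mathbb{F}_q$, and $s_n=0$ otherwise. Put $S(X)=\sum_{n=0}^{T-1}s_nX^n\in\mathbb{F}_2[X]$. For an integer $t\ge0$, the $t$-th Hasse derivative is $S^{(t)}(X)=\sum_{n=t}^{T-1}\binom{n}{t}s_nX^{n-t}$, with coefficients reduced mod $2$. Let $\beta$ be an element of an algebraic closure of $\mathbb{F}_2$ with $\beta^T=1$ and multiplicative order $k>1$ (so $k$ is odd). Let $f$ be the order of $2$ modulo $k$, and write $\zeta_N=e^{2\pi i/N}$. Let $\mathcal{P}$ be a prime ideal of $\mathbb{Z}[\zeta_k]$ containing $2$. Fix a field isomorphism $\phi:\mathbb{F}_2(\beta)=\mathbb{F}_{2^f}\to\mathbb{Z}[\zeta_k]/\mathcal{P}$,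 and let $\zeta$ be the unique complex $k$-th root of unity with $\phi(\beta)=\zeta+\mathcal{P}$. Multiplicative characters of $\mathbb{F}_q$ are homomorphisms $\mathbb{F}_q^*\to\mathbb{C}^*$, extended by value $0$ at $0$. For a rational $j$ with $(q-1)j\in\mathbb{Z}$, $\eta_j$ is the character with $\eta_j(\alpha)=e^{2\pi ij}$. Let $\rho=\eta_{1/2}$ be the quadratic character. Let $\chi$ be the character with $\chi(\alpha^n)=\zeta^n$. For a character $\psi$, set $K(\psi)=\sum_{x\in\mathbb{F}_q}\rho(x)\psi(1-x)$. For an ideal $I$ of $\mathbb{Z}[\zeta_k]$, $I\,\mathbb{Z}[\zeta_{4k}]$ is the ideal it generates in $\mathbb{Z}[\zeta_{4k}]$. *)

(* Defs.v *)
From HB Require Import structures.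
From mathcomp Require Import all_boot all_order all_algebra all_field.
Set Implicit Arguments. Unset Strict Implicit. Unset Printing Implicit Defensive.
Import Order.TTheory GRing.Theory Num.Theory.
Local Open Scope ring_scope.

(* zetaN N = e^{2 pi i / N} in algC  (N >= 1):  N.-root (-1) is the N-th root
   of -1 of minimal nonnegative argument, i.e. e^{i pi / N}; its square is
   e^{2 pi i / N}. *)
Definition zetaN (N : nat) : algC := (N.-root (-1)) ^+ 2.

Definition Zcyc (N : nat) (x : algC) : Prop :=
  exists p : {poly int}, x = (map_poly (fun z : int => z%:~R) p).[zetaN N].

Definition prime_ideal_Zcyc (N : nat) (P : algC -> Prop) : Prop :=
  (forall x, P x -> Zcyc N x) /\
  [/\ P 0,
      (forall x y, P x -> P y -> P (x + y)),
      (forall a x, Zcyc N a -> P x -> P (a * x)),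
      ~ P 1 &
      (forall a b, Zcyc N a -> Zcyc N b -> P (a * b) -> P a \/ P b)].

Definition ext_ideal (N : nat) (I : algC -> Prop) (x : algC) : Prop :=
  exists r : seq (algC * algC),
    (forall ab, ab \in r -> Zcyc N ab.1 /\ I ab.2) /\
    x = \sum_(ab <- r) ab.1 * ab.2.

Definition scale_ideal (c : algC) (P : algC -> Prop) (y : algC) : Prop :=
  exists p, P p /\ y = c * p.

Definition dlog (F : finFieldType) (a x : F) : nat :=
  odflt 0%N (omap val [pick n : 'I_(#|F|.-1) | a ^+ n == x]).

Definition mulchar (F : finFieldType) (a : F) (c : algC) (x : F) : algC :=
  if x == 0 then 0 else c ^+ dlog a x.

(* eta_{j} for j = n/d : the character with eta(a) = e^{2 pi i n/d} *)
Definition etaQ (F : finFieldType) (a : F) (n d : nat) : F -> algC :=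
  mulchar a (zetaN d ^+ n).

Definition rho (F : finFieldType) (a : F) : F -> algC := etaQ a 1 2.

Definition charmul (F : finFieldType) (f g : F -> algC) : F -> algC :=
  fun x => f x * g x.

Definition Ksum (F : finFieldType) (a : F) (psi : F -> algC) : algC :=
  \sum_(x : F) rho a x * psi (1 - x).

Definition nonsq (F : finFieldType) (x : F) : bool :=
  (x != 0) && ~~ [exists y : F, y ^+ 2 == x].

Definition slce (F : finFieldType) (a : F) (n : nat) : bool := nonsq (a ^+ n + 1).

(* S(X) = sum_{n<T} s_n X^n, with coefficients (in F_2) embedded in a field L
   of characteristic 2 *)
Definition Spoly (F : finFieldType) (a : F) (L : fieldType) : {poly L} :=
  \poly_(n < #|F|.-1) ((slce a n)%:R : L).

(* Main.v *)
Require Import Defs.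
From HB Require Import structures.
From mathcomp Require Import all_boot all_order all_algebra all_field.
From mathcomp Require Import ring lra zify.
Import Order.TTheory GRing.Theory Num.Theory.
Local Open Scope ring_scope.
Lemma sq_le_nonneg (R : realFieldType) (x y : R) : 0 <= x -> 0 <= y -> x^+2 <= y^+2 -> x <= y.
Proof. move=> hx hy h; rewrite -(ler_pXn2r (n:=2)) ?nnegrE //. Qed.

Lemma L1a (R : realFieldType) (ar ai br bi : R) :
  ar^+2 + ai^+2 = 1 -> br^+2 + bi^+2 = 1 -> 0 <= ai -> 0 <= bi ->
  0 < ai * br - ar * bi -> ar < br.
Proof.
move=> ha hb hai hbi h; rewrite ltNge; apply/negP => hle.
have [hb0|hb0] := lerP 0 br.
  have: ai <= bi by apply: sq_le_nonneg => //; nra.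
  move=> h2; nra.
have [ha0|ha0] := lerP 0 ar; first nra.
have: bi <= ai by apply: sq_le_nonneg => //; nra.
move=> h2; nra.
Qed.

Lemma L1b (R : realFieldType) (ar ai br bi : R) :
  ar^+2 + ai^+2 = 1 -> br^+2 + bi^+2 = 1 -> 0 <= ai -> 0 < bi ->
  ar < br -> 0 < ai * br - ar * bi.
Proof.
move=> ha hb hai hbi h.
have [hb0|hb0] := lerP 0 br.
  have [ha0|ha0] := lerP 0 ar; last nra.
  have: bi <= ai by apply: sq_le_nonneg => //; nra.
  move=> h2; nra.
have: ai <= bi by apply: sq_le_nonneg => //; nra.
move=> h2; nra.
Qed.

Definition reR (v : algC) : algR := in_algR (Creal_Re v).
Definition imR (v : algC) : algR := in_algR (Creal_Im v).

Lemma unitR (a : algC) : `|a| = 1 -> reR a ^+2 + imR a ^+2 = 1.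
Proof. move=> h; apply: val_inj => /=. by rewrite -normC2_Re_Im h expr1n. Qed.

Lemma Im_mulconj (a b : algC) : 'Im (a * b^*) = 'Im a * 'Re b - 'Re a * 'Im b.
Proof. rewrite ImM Re_conj Im_conj; ring. Qed.

Lemma cL1a (a b : algC) : `|a| = 1 -> `|b| = 1 -> 0 <= 'Im a -> 0 <= 'Im b ->
  0 < 'Im (a * b^*) -> 'Re a < 'Re b.
Proof.
move=> ha hb hai hbi; rewrite Im_mulconj => h.
have := @L1a _ (reR a) (imR a) (reR b) (imR b) (unitR a ha) (unitR b hb) hai hbi h.
by [].
Qed.

Lemma cL1b (a b : algC) : `|a| = 1 -> `|b| = 1 -> 0 <= 'Im a -> 0 < 'Im b ->
  'Re a < 'Re b -> 0 < 'Im (a * b^*).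
Proof.
move=> ha hb hai hbi h; rewrite Im_mulconj.
have := @L1b _ (reR a) (imR a) (reR b) (imR b) (unitR a ha) (unitR b hb) hai hbi h.
by [].
Qed.

Lemma unit_eq (a b : algC) : `|a| = 1 -> `|b| = 1 -> 0 <= 'Im a -> 0 <= 'Im b ->
  'Re a = 'Re b -> a = b.
Proof.
move=> ha hb hai hbi hr; apply/eqCP; split => //.
have h1 := unitR a ha; have h2 := unitR b hb.
have e : reR a = reR b by apply: val_inj.
have hai' : 0 <= imR a := hai. have hbi' : 0 <= imR b := hbi.
suff : imR a = imR b by move/(congr1 val).
apply/eqP; rewrite eq_le; apply/andP; split; apply: sq_le_nonneg => //;
 rewrite e in h1; lra.
Qed.

Lemma unit_le_m1 (a : algC) : `|a| = 1 -> 'Re a <= -1 -> a = -1.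
Proof.
move=> ha hr; have h1 := unitR a ha; have hr' : reR a <= -1 := hr.
have e1 : reR a = -1 by nra.
have e2 : imR a = 0 by nra.
apply/eqCP; split.
  rewrite [RHS](Creal_ReP _ _) ?rpredN ?rpred1 //; exact: (congr1 val e1).
rewrite [RHS](Creal_ImP _ _) ?rpredN ?rpred1 //; exact: (congr1 val e2).
Qed.

Lemma norm_rootN1 (v : algC) N : (0 < N)%N -> v ^+ N = -1 -> `|v| = 1.
Proof.
move=> hN h; apply/eqP; rewrite -(pexpr_eq1 hN) ?normr_ge0 //.
by rewrite -normrX h normrN1.
Qed.
Lemma yconj (y : algC) : `|y| = 1 -> y * y^* = 1.
Proof. by move=> h; rewrite -normCK h expr1n. Qed.

Lemma Re_m1 : 'Re (-1 : algC) = -1.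
Proof. by rewrite (Creal_ReP _ _) ?rpredN ?rpred1. Qed.

Lemma zetaN_prim N : odd N -> (1 < N)%N -> N.-primitive_root (zetaN N).
Proof.
move=> oN N1; have N0 : (0 < N)%N by apply: ltnW.
pose y := N.-root (-1 : algC).
have yN : y ^+ N = -1 by rewrite /y rootCK.
have Hmax : forall v, v ^+ N = -1 -> 0 <= 'Im v -> 'Re v <= 'Re y.
  by move=> v h1 h2; apply: rootC_Re_max.
have Imy : 0 <= 'Im y by apply: Im_rootC_ge0.
have ny : `|y| = 1 := norm_rootN1 y N N0 yN.
have y2N : y ^+ (2 * N) = 1 by rewrite mulnC exprM yN sqrrN expr1n.
have N2 : (0 < 2 * N)%N by rewrite muln_gt0.
have [z zprim] := C_prim_root_exists N2.
pose z' := if 0 <= 'Im z then z else z^*.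
have z'prim : (2 * N).-primitive_root z'.
  by rewrite /z'; case: ifP => // _; rewrite fmorph_primitive_root.
have z'N : z' ^+ N = -1.
  have : (z' ^+ N) ^+ 2 == 1 by rewrite -exprM mulnC (prim_expr_order z'prim).
  rewrite sqrf_eq1 => /orP [|/eqP //].
  rewrite -(prim_order_dvd z'prim) => /dvdn_leq => /(_ N0).
  by rewrite leqNgt -[X in (X < _)%N]mul1n ltn_pmul2r // => /negP.
have Imz' : 0 <= 'Im z'.
  rewrite /z'; case: ifP => // /negbT h; rewrite Im_conj oppr_ge0.
  by move: h; rewrite -real_ltNge ?Creal_Im ?rpred0 // => /ltW.
have nz' : `|z'| = 1 := norm_rootN1 z' N N0 z'N.
have ynm1 : y != -1.
  apply/eqP => ey.
  have := Hmax _ z'N Imz'; rewrite ey Re_m1 => /(unit_le_m1 z' nz') ez.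
  have := prim_order_dvd z'prim 2; rewrite ez sqrrN expr1n eqxx.
  move/dvdn_leq => /(_ isT); rewrite -[X in (_ <= X)%N]muln1 leq_pmul2l //.
  by rewrite leqNgt N1.
have Rey : 0 < 'Re y.
  rewrite real_ltNge ?Creal_Re ?rpred0 //; apply/negP => hr.
  pose u := - y ^+ 2.
  have uN : u ^+ N = -1.
    by rewrite /u exprNn -signr_odd oN expr1 -exprM y2N mulr1.
  have Imu : 0 <= 'Im u.
    rewrite /u raddfN /= ImM oppr_ge0 -mulr2n mulrn_wle0 //.
    by rewrite mulr_le0_ge0.
  have := Hmax _ uN Imu.
  have hu : 'Re u = 'Im y ^+ 2 - 'Re y ^+ 2.
    rewrite /u raddfN /= ReM; ring.
  rewrite hu => h.
  have h1 := unitR y ny.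
  have hr' : reR y <= 0 := hr.
  have h' : imR y ^+ 2 - reR y ^+ 2 <= reR y := h.
  have : reR y <= -1 by nra.
  by move/(unit_le_m1 y ny); apply/eqP.
have Imy' : 0 < 'Im y.
  rewrite lt_def Imy andbT; apply/eqP => hi.
  have h1 := unitR y ny.
  have hr' : 0 < reR y := Rey.
  have hi' : imR y = 0 by apply: val_inj.
  have e1 : reR y = 1 by nra.
  have ey : y = 1.
    apply/eqCP; split; last by rewrite hi (Creal_ImP _ _) ?rpred1.
    rewrite [RHS](Creal_ReP _ _) ?rpred1 //; exact: (congr1 val e1).
  by move: yN; rewrite ey expr1n => /eqP; rewrite -subr_eq0 opprK (@pnatr_eq0 algC 2).
have Imy2 : 0 < 'Im (y ^+ 2).
  by rewrite ImM -mulr2n mulrn_wgt0 // mulr_gt0.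
pose inY (v : algC) := [exists j : 'I_(2 * N), v == y ^+ j].
have yy := yconj y ny.
have step : forall v, v ^+ N = -1 -> 0 <= 'Im v -> ~~ inY v ->
    exists v', [/\ v' ^+ N = -1, 0 <= 'Im v', ~~ inY v' & 'Re v < 'Re v'].
  move=> v vN Imv nY.
  have nv := norm_rootN1 v N N0 vN.
  pose v' := v * y^* ^+ 2.
  have v'N : v' ^+ N = -1.
    by rewrite /v' exprMn vN -exprM mulnC exprM -rmorphXn yN rmorphN1 sqrrN expr1n mulr1.
  have nv' : `|v'| = 1 := norm_rootN1 v' N N0 v'N.
  case: (boolP (0 <= 'Im v')) => hv'.
    exists v'; split => //.
      apply: contra nY => /existsP [j /eqP ej]; apply/existsP.
      exists (Ordinal (ltn_pmod (j + 2) N2)); rewrite /= expr_mod // exprD -ej.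
      by rewrite /v' -mulrA -exprMn [y^* * _]mulrC yy expr1n mulr1.
    apply: cL1a => //.
    rewrite /v' rmorphM rmorphXn /= conjCK mulrA.
    by rewrite -normCK nv expr1n mul1r.
  exfalso.
  pose w := v'^*.
  have wN : w ^+ N = -1 by rewrite /w -rmorphXn v'N rmorphN1.
  have Imw : 0 <= 'Im w.
    by move: hv'; rewrite /w Im_conj oppr_ge0 -real_ltNge ?Creal_Im ?rpred0 // => /ltW.
  have nw : `|w| = 1 := norm_rootN1 w N N0 wN.
  have := Hmax _ wN Imw; apply/negP; rewrite -real_ltNge ?Creal_Re //.
  apply: cL1a => //.
  have -> : y * w^* = v * y^* by rewrite /w /= conjCK /v' expr2 mulrCA [y * (_ * _)]mulrA yy mul1r.
  apply: cL1b => //.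
  rewrite lt_def Hmax // andbT; apply/negP => /eqP ev.
  move/negP: nY; apply; apply/existsP; exists (Ordinal (leq_trans N1 (leq_pmull N (isT : (0 < 2)%N)))) => /=.
  by rewrite expr1 (unit_eq v y nv ny Imv Imy (esym ev)).
have desc : forall (n : nat) (v : algC), (#|[set i : 'I_(2 * N) | ('Re v < 'Re (z ^+ i))%R]| <= n)%N ->
    v ^+ N = -1 -> 0 <= 'Im v -> inY v.
  elim=> [|n IH] v hc vN Imv; apply: contraT => nY;
    have [v' [v'N Imv' nY' lt]] := step v vN Imv nY.
    have v'2 : v' ^+ (2 * N) = 1 by rewrite mulnC exprM v'N sqrrN expr1n.
    have [i vi] := prim_rootP zprim v'2.
    have : #|[set i : 'I_(2 * N) | ('Re v < 'Re (z ^+ i))%R]| != 0%N.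
      by rewrite cards_eq0; apply/set0Pn; exists i; rewrite inE -vi.
    by rewrite -leqn0 hc.
  have v'2 : v' ^+ (2 * N) = 1 by rewrite mulnC exprM v'N sqrrN expr1n.
  have [i vi] := prim_rootP zprim v'2.
  have pr : [set i : 'I_(2 * N) | ('Re v' < 'Re (z ^+ i))%R] \proper
            [set i : 'I_(2 * N) | ('Re v < 'Re (z ^+ i))%R].
    apply/properP; split.
      by apply/subsetP => j; rewrite !inE => h; exact: lt_trans lt h.
    by exists i; rewrite inE -vi ?ltxx.
  have := IH v' _ v'N Imv'; rewrite (negbTE nY') => H; apply: H.
  by rewrite -ltnS; apply: leq_trans hc; apply: proper_card.
have /existsP [j /eqP ej] := desc _ z' (leqnn _) z'N Imz'.
have [m ym mdiv] := prim_order_exists N2 y2N.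
have : (2 * N %| m)%N.
  by rewrite (prim_order_dvd z'prim) ej -exprM mulnC exprM (prim_expr_order ym) expr1n.
move=> dm; have em : m = (2 * N)%N by apply/eqP; rewrite eqn_dvd mdiv dm.
rewrite em in ym.
have := dvdn_prim_root ym (dvdn_mull 2 (dvdnn N)).
by rewrite mulnK.
Qed.

Section ZcycL.
Variable N : nat.
Local Notation ip := (map_poly (fun z : int => z%:~R : algC)).

Lemma Zcyc_int (z : int) : Zcyc N z%:~R.
Proof. by exists z%:P; rewrite map_polyC hornerC. Qed.

Lemma Zcyc_nat n : Zcyc N n%:R.
Proof. by have := Zcyc_int n; rewrite pmulrn. Qed.

Lemma Zcyc_0 : Zcyc N 0. Proof. exact: (Zcyc_nat 0). Qed.
Lemma Zcyc_1 : Zcyc N 1. Proof. exact: (Zcyc_nat 1). Qed.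

Lemma Zcyc_D x y : Zcyc N x -> Zcyc N y -> Zcyc N (x + y).
Proof. by move=> [p ->] [q ->]; exists (p + q); rewrite rmorphD hornerD. Qed.

Lemma Zcyc_M x y : Zcyc N x -> Zcyc N y -> Zcyc N (x * y).
Proof. by move=> [p ->] [q ->]; exists (p * q); rewrite rmorphM hornerM. Qed.

Lemma Zcyc_N x : Zcyc N x -> Zcyc N (- x).
Proof. by move=> h; rewrite -mulN1r; apply: Zcyc_M => //; exact: (Zcyc_int (-1)). Qed.

Lemma Zcyc_z : Zcyc N (zetaN N).
Proof. by exists 'X; rewrite map_polyX hornerX. Qed.

Lemma Zcyc_X x n : Zcyc N x -> Zcyc N (x ^+ n).
Proof. by move=> h; elim: n => [|n IH]; [exact: Zcyc_1 | rewrite exprS; apply: Zcyc_M]. Qed.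

Lemma Zcyc_sum (I : Type) (r : seq I) (Pr : pred I) (F : I -> algC) :
  (forall i, Pr i -> Zcyc N (F i)) -> Zcyc N (\sum_(i <- r | Pr i) F i).
Proof.
move=> h; apply: (big_rec (fun x => Zcyc N x)); first exact: Zcyc_0.
by move=> i x Pi hx; apply: Zcyc_D => //; apply: h.
Qed.
End ZcycL.

Lemma zetaN_pow N : (0 < N)%N -> zetaN N ^+ N = 1.
Proof. by move=> h; rewrite /zetaN -exprM mulnC exprM rootCK // sqrrN expr1n. Qed.

Lemma zetaN_half N : (0 < N)%N -> zetaN (2 * N) ^+ N = -1.
Proof.
by move=> h; rewrite /zetaN -exprM rootCK // muln_gt0.
Qed.

Lemma Zcyc_root k (x : algC) : odd k -> (1 < k)%N -> x ^+ k = 1 -> Zcyc k x.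
Proof.
move=> ok k1 xk; have [i ->] := prim_rootP (zetaN_prim k ok k1) xk.
by apply: Zcyc_X; apply: Zcyc_z.
Qed.

Definition ii k : algC := zetaN (4 * k) ^+ k.

Lemma ii2 k : (0 < k)%N -> ii k ^+ 2 = -1.
Proof.
move=> h; rewrite /ii -exprM [(k * 2)%N]mulnC.
have h2 : zetaN (2 * (2 * k)) ^+ (2 * k) = -1 by rewrite zetaN_half // muln_gt0 h.
rewrite mulnA in h2.
exact: h2.
Qed.

Lemma w_decomp k : odd k -> (1 < k)%N ->
  exists d, Zcyc k d /\ zetaN (4 * k) = ii k * d.
Proof.
move=> ok k1; have k0 : (0 < k)%N by apply: ltnW.
pose w := zetaN (4 * k).
pose a := k./2.
have ek : k = (a.*2).+1 by rewrite -[LHS]odd_double_half ok.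
pose t := (3 * a * a + 3 * a + 1)%N.
exists ((-1) ^+ a * (w ^+ 4) ^+ t); split.
  apply: Zcyc_M; first by apply: Zcyc_X; apply: (Zcyc_int k (-1)).
  apply: Zcyc_X; apply: Zcyc_root => //.
  by rewrite -exprM zetaN_pow // muln_gt0.
have w4k : w ^+ (4 * k) = 1 by rewrite zetaN_pow // muln_gt0.
have hm1 : (-1 : algC) = w ^+ (k * 2) by rewrite exprM; exact/esym/(ii2 k k0).
rewrite /ii -/w hm1; clearbody w; rewrite -!exprM -!exprD.
have -> : (k + (k * 2 * a + 4 * t) = (4 * k) * k + 1)%N.
  rewrite /t ek -muln2 -addn1; ring.
by rewrite exprD exprM w4k expr1n mul1r expr1.
Qed.

Lemma Zcyc4_decomp k x : odd k -> (1 < k)%N -> Zcyc (4 * k) x ->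
  exists b c, [/\ Zcyc k b, Zcyc k c & x = b + ii k * c].
Proof.
move=> ok k1 [p ->]; have k0 : (0 < k)%N by apply: ltnW.
have [d [Zd ed]] := w_decomp k ok k1.
elim/poly_ind: p => [|p c [b [c' [Zb Zc ep]]]].
  exists 0, 0; split; try exact: Zcyc_0.
  by rewrite rmorph0 horner0 mulr0 addr0.
exists (c%:~R - c' * d), (b * d); split.
- by apply: Zcyc_D; [exact: Zcyc_int | apply: Zcyc_N; apply: Zcyc_M].
- by apply: Zcyc_M.
rewrite rmorphD rmorphM /= map_polyX map_polyC hornerD hornerMX hornerC /= ep ed.
have h2 := ii2 k k0.
have -> : (b + ii k * c') * (ii k * d) = b * d * ii k + c' * d * ii k ^+ 2 by ring.
rewrite h2; ring.
Qed.

Lemma contract k (P : algC -> Prop) (A : algC) : odd k -> (1 < k)%N ->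
  prime_ideal_Zcyc k P -> Zcyc k A ->
  ext_ideal (4 * k) (scale_ideal 8 P) (- (8 * A)) -> P A.
Proof.
move=> ok k1 [PZ [P0 Padd Pmul _ Pprime]] ZA [r [hr er]].
have k0 : (0 < k)%N by apply: ltnW.
have step : forall r : seq (algC * algC),
    (forall ab, ab \in r -> Zcyc (4 * k) ab.1 /\ scale_ideal 8 P ab.2) ->
    exists B C, [/\ P B, P C & \sum_(ab <- r) ab.1 * ab.2 = 8 * (B + ii k * C)].
  elim=> [|ab s IH] h.
    by exists 0, 0; split => //; rewrite big_nil; ring.
  have [h1 [p [Pp ep]]] := h ab (mem_head _ _).
  have [b [c [Zb Zc eb]]] := Zcyc4_decomp k ab.1 ok k1 h1.
  have [|B [C [PB PC eB]]] := IH.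
    by move=> x hx; apply: h; rewrite in_cons hx orbT.
  exists (b * p + B), (c * p + C); split.
  - by apply: Padd => //; apply: Pmul.
  - by apply: Padd => //; apply: Pmul.
  by rewrite big_cons eB ep eb; ring.
have [B [C [PB PC eq]]] := step r hr.
rewrite -er in eq.
have eA : A = - (B + ii k * C).
  apply: (@mulfI _ 8); first by rewrite pnatr_eq0.
  by rewrite mulrN -eq opprK.
pose D := A + B.
have ZB := PZ _ PB; have ZC := PZ _ PC.
have ZD : Zcyc k D by apply: Zcyc_D.
have PDD : P (D * D).
  have -> : D * D = (- C) * C.
    rewrite /D eA.
    have -> : (- (B + ii k * C) + B) * (- (B + ii k * C) + B) = ii k ^+ 2 * C * C by ring.
    by rewrite ii2 // mulN1r mulNr.
  by apply: Pmul => //; apply: Zcyc_N.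
have PD : P D by case: (Pprime D D ZD ZD PDD).
have -> : A = D + (-1) * B by rewrite /D; ring.
apply: Padd => //; apply: Pmul => //; exact: (Zcyc_int k (-1)).
Qed.
Set Implicit Arguments. Unset Strict Implicit.

Section FF.
Variables (F : finFieldType) (a : F).
Local Notation T := (#|F|.-1).
Hypothesis hprim : T.-primitive_root a.
Hypothesis hq4 : (#|F| %% 4 = 1)%N.

Lemma T_gt0 : (0 < T)%N.
Proof. exact: prim_order_gt0 hprim. Qed.

Lemma cardF_T : #|F| = T.+1.
Proof. by rewrite prednK // lt0n; apply/eqP => h; move: T_gt0; rewrite h. Qed.

Lemma a_neq0 : a != 0.
Proof. by rewrite (prim_root_eq0 hprim) -lt0n T_gt0. Qed.

Lemma nz_pow (x : F) : x != 0 -> {i : 'I_T | x = a ^+ i}.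
Proof.
move=> hx; apply: (prim_rootP hprim).
have := expf_card x; rewrite cardF_T exprS => /eqP.
by rewrite -[X in _ == X]mulr1 (inj_eq (mulfI hx)) => /eqP.
Qed.

Lemma pow_neq0 n : a ^+ n != 0.
Proof. by rewrite expf_neq0 // a_neq0. Qed.

Lemma dlog_exp n : dlog a (a ^+ n) = (n %% T)%N.
Proof.
rewrite /dlog; case: pickP => [i /eqP hi | none] /=.
  move/eqP: hi; rewrite (eq_prim_root_expr hprim) => /eqP.
  by rewrite modn_small.
have := none (Ordinal (ltn_pmod n T_gt0)).
by rewrite /= (prim_expr_mod hprim) eqxx.
Qed.

Lemma mulchar_exp (c : algC) n : c ^+ T = 1 -> mulchar a c (a ^+ n) = c ^+ n.
Proof.
by move=> hc; rewrite /mulchar (negbTE (pow_neq0 n)) dlog_exp expr_mod.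
Qed.

Lemma mulchar0 c : mulchar a c 0 = 0.
Proof. by rewrite /mulchar eqxx. Qed.

Lemma mulcharM (c : algC) x y : c ^+ T = 1 ->
  mulchar a c (x * y) = mulchar a c x * mulchar a c y.
Proof.
move=> hc.
have [->|hx] := eqVneq x 0; first by rewrite mul0r !mulchar0 mul0r.
have [->|hy] := eqVneq y 0; first by rewrite mulr0 !mulchar0 mulr0.
have [i ->] := nz_pow hx; have [j ->] := nz_pow hy.
by rewrite -exprD !mulchar_exp // exprD.
Qed.

Lemma mulcharMc (c d : algC) x : mulchar a c x * mulchar a d x = mulchar a (c * d) x.
Proof. by rewrite /mulchar; case: (x == 0); rewrite ?mulr0 // exprMn. Qed.

Lemma sum_pow (f : F -> algC) :
  \sum_(x : F) f x = f 0 + \sum_(i < T) f (a ^+ i).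
Proof.
rewrite (bigD1 0) //=; congr (_ + _).
have inj : {in [pred i : 'I_T | true] &, injective (fun i : 'I_T => a ^+ i)}.
  move=> i j _ _ /eqP; rewrite (eq_prim_root_expr hprim) !modn_small //.
  by move/eqP/val_inj.
rewrite -(big_imset f inj) /=; apply: eq_bigl => x.
apply/idP/idP.
  by move=> hx; have [i ->] := nz_pow hx; apply/imsetP; exists i.
by case/imsetP => i _ ->; apply: pow_neq0.
Qed.

Lemma T4 : T = (4 * (T %/ 4))%N.
Proof. have := cardF_T; have := hq4; move=> h1 h2; rewrite h2 in h1; lia. Qed.

Lemma Thalf : (T./2 = 2 * (T %/ 4))%N.
Proof. rewrite {1}T4; lia. Qed.

Lemma T2 : T = (2 * T./2)%N.
Proof. rewrite Thalf {1}T4; lia. Qed.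

Lemma a_half : a ^+ (T./2) = -1.
Proof.
have : (a ^+ (T./2)) ^+ 2 == 1.
  by rewrite -exprM mulnC Thalf mulnA -T4 (prim_expr_order hprim).
rewrite sqrf_eq1 => /orP [|/eqP //].
rewrite -(prim_order_dvd hprim) => /dvdn_leq.
have h0 := T_gt0; rewrite Thalf {2}T4; lia.
Qed.

Lemma m1T : (-1 : algC) ^+ T = 1.
Proof. by rewrite T4 exprM -signr_odd expr0 expr1n. Qed.

Lemma sq_exists i : [exists y : F, y ^+ 2 == a ^+ i] = ~~ odd i.
Proof.
apply/existsP/idP.
  move=> [y /eqP hy].
  have hy0 : y != 0 by apply: contra_eqN hy => /eqP ->; rewrite expr0n eq_sym pow_neq0.
  have [j ej] := nz_pow hy0; rewrite ej -exprM in hy.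
  move/eqP: hy; rewrite (eq_prim_root_expr hprim) => /eqP h.
  have d2 : (2 %| T)%N by rewrite T4 dvdn_mulr.
  have := congr1 (fun n => n %% 2)%N h; rewrite /= !(modn_dvdm _ d2).
  by rewrite !modn2 oddM andbF; case: (odd i).
move=> he; exists (a ^+ (i./2)); rewrite -exprM.
by rewrite -{2}(odd_double_half i) (negbTE he) add0n -muln2.
Qed.

Lemma rho_val x : rho a x = 1 - 2 * (nonsq x)%:R - (x == 0)%:R.
Proof.
rewrite /rho /etaQ.
have z2 : zetaN 2 = -1 by have := zetaN_half 1 isT; rewrite expr1.
rewrite z2 expr1.
have [->|hx] := eqVneq x 0.
  by rewrite mulchar0 /nonsq eqxx /=; ring.
have [i ->] := nz_pow hx.
rewrite mulchar_exp ?m1T // /nonsq pow_neq0 sq_exists negbK /=.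
by rewrite -signr_odd; case: (odd i) => /=; ring.
Qed.

Lemma half_lt : (T./2 < T)%N.
Proof. have h0 := T_gt0; rewrite Thalf {2}T4; lia. Qed.

Lemma eq_half (i : 'I_T) : (1 + a ^+ i == 0) = (val i == T./2).
Proof.
rewrite addrC addr_eq0 -a_half (eq_prim_root_expr hprim) !modn_small //.
exact: half_lt.
Qed.

Lemma K_eval (c : algC) : c ^+ T = 1 ->
  Ksum a (mulchar a c) = c ^+ (T./2) * (\sum_(i < T) c ^+ i
     - 2 * \sum_(i < T) (slce a i)%:R * c ^+ i - c ^+ (T./2)).
Proof.
move=> hc; rewrite /Ksum (reindex_inj (addrI 1)) /=.
transitivity (\sum_j mulchar a c (-1) * (rho a (1 + j) * mulchar a c j)).
  apply: eq_bigr => j _; rewrite (_ : 1 - (1 + j) = -1 * j); last by ring.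
  by rewrite mulcharM //; ring.
rewrite -mulr_sumr sum_pow -a_half mulchar_exp // mulchar0 mulr0 add0r.
congr (_ * _).
transitivity (\sum_(i < T) (c ^+ i - 2 * ((slce a i)%:R * c ^+ i)
    - (val i == T./2)%:R * c ^+ i)).
  apply: eq_bigr => i _; rewrite mulchar_exp // rho_val eq_half.
  by rewrite /slce [a ^+ i + 1]addrC; ring.
rewrite !sumrB -mulr_sumr; congr (_ - _ - _).
rewrite (bigD1 (Ordinal half_lt)) //= eqxx mul1r big1 ?addr0 // => i hi.
suff -> : (val i == T./2) = false by rewrite mul0r.
by apply/negbTE; apply: contra hi => /eqP h; apply/eqP/val_inj.
Qed.

Lemma geom0 (c : algC) : c ^+ T = 1 -> c != 1 -> \sum_(i < T) c ^+ i = 0.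
Proof.
move=> hc hc1; have := subrX1 c T; rewrite hc subrr => /esym/eqP.
by rewrite mulf_eq0 subr_eq0 (negbTE hc1) /= => /eqP.
Qed.
End FF.
Set Implicit Arguments. Unset Strict Implicit.

Lemma w4_2 : zetaN 4 ^+ 2 = -1.
Proof. exact: (zetaN_half 2 isT). Qed.

Lemma w4_4 : zetaN 4 ^+ 4 = 1.
Proof. exact: (zetaN_pow 4 isT). Qed.

Lemma pointwise i : let w := zetaN 4 in
  1 + w * w ^+ i - (-1) ^+ i - w * (w ^+ 3) ^+ i = 4 * ((i %% 4 == 3)%N)%:R.
Proof.
move=> w.
have e n : w ^+ n = w ^+ (n %% 4) by rewrite expr_mod // w4_4.
have w2 : w ^+ 2 = -1 := w4_2.
have w3 : w ^+ 3 = - w by rewrite exprS w2 mulrN1.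
clearbody w.
rewrite -w2 -!exprM -!exprS (e i.+1) (e (2 * i)%N) (e (3 * i).+1).
have -> : (i.+1 %% 4 = (i %% 4).+1 %% 4)%N by lia.
have -> : (2 * i %% 4 = 2 * (i %% 4) %% 4)%N by lia.
have -> : ((3 * i).+1 %% 4 = (3 * (i %% 4)).+1 %% 4)%N.
  by lia.
have : (i %% 4 < 4)%N by rewrite ltn_mod.
case: (i %% 4)%N => [|[|[|[|n]]]] //= _; rewrite ?expr0 ?expr1 ?w2 ?w3; ring.
Qed.

Lemma Ksum_ext (F : finFieldType) (a : F) (f g : F -> algC) : f =1 g -> Ksum a f = Ksum a g.
Proof. by move=> h; apply: eq_bigr => x _; rewrite h. Qed.

Section Combo.
Variables (F : finFieldType) (a : F) (zeta : algC).
Local Notation T := (#|F|.-1).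
Hypothesis hprim : T.-primitive_root a.
Hypothesis hq4 : (#|F| %% 4 = 1)%N.
Hypothesis hzT : zeta ^+ (T./2) = 1.
Hypothesis hz1 : forall u : algC, u ^+ 4 = 1 -> u * zeta != 1.

Local Notation w := (zetaN 4).
Let e : algC := (-1) ^+ (T %/ 4).

Definition Aval : algC := \sum_(i < T) (((i %% 4 == 3)%N && slce a i))%:R * zeta ^+ i.

Let S (u : algC) := \sum_(i < T) (slce a i)%:R * (u * zeta) ^+ i.

Lemma Kval (u : algC) : u ^+ 4 = 1 ->
  Ksum a (mulchar a (u * zeta)) = u ^+ (T./2) * (- 2 * S u - u ^+ (T./2)).
Proof.
move=> hu.
have hT : (u * zeta) ^+ T = 1.
  rewrite exprMn {1}(T4 hprim hq4) exprM hu expr1n mul1r.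
  by rewrite (T2 hprim hq4) mulnC exprM hzT expr1n.
rewrite (K_eval hprim hq4) // geom0 // ?hz1 // exprMn hzT mulr1 /S; ring.
Qed.

Lemma halfpow (u : algC) : u ^+ (T./2) = (u ^+ 2) ^+ (T %/ 4).
Proof. by rewrite (Thalf hprim hq4) exprM. Qed.

Lemma combo :
  let K := Ksum a in let chi := mulchar a zeta in
  K chi + e * w * K (charmul (etaQ a 1 4) chi) - K (charmul (etaQ a 1 2) chi)
    - e * w * K (charmul (etaQ a 3 4) chi) = - (8 * Aval).
Proof.
move=> K chi.
have z2 : zetaN 2 = -1 by have := zetaN_half 1 isT; rewrite expr1.
have w4 := w4_4; have w2 := w4_2.
have E0 : K chi = K (mulchar a (1 * zeta)) by rewrite mul1r.
have E1 : K (charmul (etaQ a 1 4) chi) = K (mulchar a (w ^+ 1 * zeta)).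
  by apply: Ksum_ext => x; rewrite /charmul /etaQ /chi mulcharMc.
have E2 : K (charmul (etaQ a 1 2) chi) = K (mulchar a ((-1) * zeta)).
  by apply: Ksum_ext => x; rewrite /charmul /etaQ /chi mulcharMc z2 expr1.
have E3 : K (charmul (etaQ a 3 4) chi) = K (mulchar a (w ^+ 3 * zeta)).
  by apply: Ksum_ext => x; rewrite /charmul /etaQ /chi mulcharMc.
have p1 : (w ^+ 1) ^+ 4 = 1 by rewrite expr1.
have pm1 : (-1 : algC) ^+ 4 = 1 by rewrite -signr_odd.
have p3 : (w ^+ 3) ^+ 4 = 1 by rewrite -exprM mulnC exprM w4 expr1n.
rewrite E0 E1 E2 E3 /K !Kval ?expr1n //.
have h3 : (w ^+ 3) ^+ 2 = -1 by rewrite -exprM mulnC exprM w2 -signr_odd expr1.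
rewrite !halfpow expr1 w2 h3 sqrrN !expr1n -/e.
have HS : S 1 + w * S (w ^+ 1) - S (-1) - w * S (w ^+ 3) = 4 * Aval.
  rewrite /S /Aval !mulr_sumr -big_split /= -!sumrB.
  apply: eq_bigr => i _.
  have ex : forall u : algC, (u * zeta) ^+ i = u ^+ i * zeta ^+ i by move=> u; exact: exprMn.
  rewrite !ex expr1n expr1.
  have := pointwise i; rewrite /= => hp.
  rewrite -mulnb natrM; set s := (slce a i)%:R; set zi := zeta ^+ i.
  transitivity (s * zi * (1 + w * w ^+ i - (-1) ^+ i - w * (w ^+ 3) ^+ i)); first by ring.
  by rewrite hp; ring.
have -> : 8 * Aval = 2 * (4 * Aval) by ring.
rewrite -HS /e -signr_odd; case: (odd _); rewrite /= ?expr1 ?expr0; ring.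
Qed.
End Combo.
Set Implicit Arguments. Unset Strict Implicit.

Lemma odd_bin3 n : odd 'C(n, 3) = (n %% 4 == 3)%N /\
   odd 'C(n, 2) = (2 <= n %% 4)%N.
Proof.
elim: n => [|n [IH3 IH2]]; first by [].
rewrite !binS bin1 !oddD IH3 IH2.
have h1 : (n %% 4 < 4)%N by rewrite ltn_mod.
have hm : (n.+1 %% 4 = (n %% 4).+1 %% 4)%N by lia.
have ho : odd n = odd (n %% 4).
  by rewrite {1}(divn_eq n 4) oddD oddM andbF.
rewrite hm ho.
by case: (n %% 4)%N h1 => [|[|[|[|m]]]].
Qed.

Lemma natr_pchar2 (L : fieldType) m : 2%N \in [pchar L] -> (m%:R : L) = (odd m)%:R.
Proof.
move=> h2; rewrite -{1}(odd_double_half m) natrD -muln2 natrM (pcharf0 h2).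
by rewrite mulr0 addr0.
Qed.

Lemma deriv_eval (F : finFieldType) (a : F) (L : fieldType) (beta : L) :
  2%N \in [pchar L] ->
  (nderivn 3 (Spoly a L)).[beta] * beta ^+ 3 =
  \sum_(i < #|F|.-1) (((i %% 4 == 3)%N && slce a i))%:R * beta ^+ i.
Proof.
move=> h2; rewrite /Spoly poly_def raddf_sum horner_sum mulr_suml.
apply: eq_bigr => i _.
rewrite /= nderivnZ nderivnXn hornerZ hornerMn hornerXn.
have [hi|hi] := ltnP i 3.
  rewrite bin_small // mulr0n mulr0 mul0r.
  by rewrite modn_small ?(leq_trans hi) // (ltn_eqF hi) mul0r.
rewrite -[_ *+ 'C(i, 3)]mulr_natr (natr_pchar2 'C(i, 3) h2).
have [-> _] := odd_bin3 i.
set c := ((i %% 4)%N == 3)%:R; set s := (slce a i)%:R.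
have -> : s * (beta ^+ (i - 3) * c) * beta ^+ 3 = s * c * (beta ^+ (i - 3) * beta ^+ 3) by ring.
by rewrite -exprD subnK // -mulnb natrM -/c -/s; ring.
Qed.
Set Implicit Arguments. Unset Strict Implicit.

Lemma k_odd (L : fieldType) (beta : L) k : 2%N \in [pchar L] ->
  k.-primitive_root beta -> odd k.
Proof.
move=> h2 hk; apply: contraT => ek.
have d2 : (2 %| k)%N by rewrite dvdn2.
have hz := dvdn_prim_root hk d2.
set z := beta ^+ (k %/ 2) in hz.
have z2 : z ^+ 2 = 1 by rewrite (prim_expr_order hz).
have : (z - 1) ^+ 2 = 0.
  have -> : (z - 1) ^+ 2 = z ^+ 2 + 1 - 2%:R * z by rewrite -mulr_natl; ring.
  by rewrite z2 (pcharf0 h2) mul0r subr0 -(pcharf0 h2).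
move/eqP; rewrite expf_eq0 /= subr_eq0 => /eqP ez.
by have := prim_order_dvd hz 1; rewrite ez expr1n eqxx.
Qed.

Lemma pow_dvd (x : algC) k m : x ^+ k = 1 -> (k %| m)%N -> x ^+ m = 1.
Proof. by move=> h /dvdnP [t ->]; rewrite mulnC exprM h expr1n. Qed.

Unset Implicit Arguments.
Theorem mainTheorem5
  (p m : nat) (F : finFieldType) (alpha : F) (k : nat)
  (L : finFieldType) (beta : L) (P : algC -> Prop) (psi : algC -> L) (zeta : algC) :
  prime p -> odd p -> (0 < m)%N -> #|F| = (p ^ m)%N ->
  (#|F|.-1).-primitive_root alpha ->
  (#|F| %% 4 = 1)%N ->
  2%N \in [pchar L] ->
  beta ^+ (#|F|.-1) = 1 ->
  (1 < k)%N -> k.-primitive_root beta ->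
  prime_ideal_Zcyc k P -> P 2 ->
  (forall x y, Zcyc k x -> Zcyc k y -> psi (x + y) = psi x + psi y) ->
  (forall x y, Zcyc k x -> Zcyc k y -> psi (x * y) = psi x * psi y) ->
  psi 1 = 1 ->
  (forall l : L, exists x, Zcyc k x /\ psi x = l) ->
  (forall x, Zcyc k x -> (P x <-> psi x = 0)) ->
  zeta ^+ k = 1 -> psi zeta = beta ->
  let chi := mulchar alpha zeta in
  let K := Ksum alpha in
  let z4 := zetaN 4 in
  let I8P := ext_ideal (4 * k) (scale_ideal 8 P) in
  ((nderivn 3 (Spoly alpha L)).[beta] = 0 <->
   if (#|F| %% 8 == 1)%N then
     I8P (K chi + z4 * K (charmul (etaQ alpha 1 4) chi)
          - K (charmul (etaQ alpha 1 2) chi) - z4 * K (charmul (etaQ alpha 3 4) chi))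
   else
     I8P (K chi - z4 * K (charmul (etaQ alpha 1 4) chi)
          - K (charmul (etaQ alpha 1 2) chi) + z4 * K (charmul (etaQ alpha 3 4) chi))).
Proof.
move=> _ _ _ _ hprim hq4 h2 hbT k1 hk hPI _ psiD psiM psi1 _ hker zk hpz.
move=> chi K z4 I8P.
pose T := #|F|.-1.
have ok : odd k := k_odd h2 hk.
have k0 : (0 < k)%N by apply: ltnW.
have kT : (k %| T)%N by rewrite (prim_order_dvd hk) hbT.
have kT2 : (k %| T./2)%N.
  by rewrite -(Gauss_dvdr _ (_ : coprime k 2)) ?coprimen2 // -(T2 hprim hq4).
have hzT : zeta ^+ (T./2) = 1 := pow_dvd zk kT2.
have Zz : Zcyc k zeta := @Zcyc_root _ _ ok k1 zk.
have psi0 : psi 0 = 0.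
  have := psiD 0 0 (Zcyc_0 k) (Zcyc_0 k); rewrite addr0 => h.
  by apply: (addrI (psi 0)); rewrite -h addr0.
have psin : forall n, psi n%:R = n%:R.
  elim=> [|n IH]; first by rewrite psi0.
  rewrite !mulrS psiD; [by rewrite psi1 IH | exact: Zcyc_1 | exact: Zcyc_nat].
have psiX : forall n, psi (zeta ^+ n) = beta ^+ n.
  elim=> [|n IH]; first by rewrite !expr0 psi1.
  rewrite !exprS psiM; [by rewrite IH hpz | exact: Zz | exact: Zcyc_X].
have beta1 : beta != 1.
  apply/negP => /eqP eb; have := prim_order_dvd hk 1.
  by rewrite eb expr1n eqxx dvdn1 => /eqP ek; rewrite ek in k1.
have hz1 : forall u : algC, u ^+ 4 = 1 -> u * zeta != 1.
  move=> u hu; apply/negP => /eqP huz.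
  have z4' : zeta ^+ 4 = 1.
    by have := congr1 (fun x => x ^+ 4) huz; rewrite /= exprMn hu mul1r expr1n.
  pose a := k./2.
  have ek : k = (a.*2).+1 by rewrite -[LHS]odd_double_half ok.
  have : zeta ^+ (4 * (a * a + a)).+1 = 1.
    have -> : ((4 * (a * a + a)).+1 = k * k)%N by rewrite ek -muln2 -addn1; ring.
    by rewrite exprM zk expr1n.
  rewrite exprS exprM z4' expr1n mulr1 => ez.
  by move: beta1; rewrite -hpz ez psi1 eqxx.
pose A := Aval alpha zeta.
have ZA : Zcyc k A.
  apply: Zcyc_sum => i _; apply: Zcyc_M; [exact: Zcyc_nat | exact: Zcyc_X].
have psiA : psi A = \sum_(i < T) (((i %% 4 == 3)%N && slce alpha i))%:R * beta ^+ i.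
  rewrite /A /Aval.
  suff [] : Zcyc k (\sum_(i < T) (((i %% 4 == 3)%N && slce alpha i))%:R * zeta ^+ i) /\
    psi (\sum_(i < T) (((i %% 4 == 3)%N && slce alpha i))%:R * zeta ^+ i) =
     \sum_(i < T) (((i %% 4 == 3)%N && slce alpha i))%:R * beta ^+ i by [].
  apply: (big_rec2 (fun x y => Zcyc k x /\ psi x = y)); first by split; [exact: Zcyc_0|].
  move=> i y1 y2 _ [Zy1 <-].
  have Zt : Zcyc k ((((i %% 4 == 3)%N && slce alpha i))%:R * zeta ^+ i).
    by apply: Zcyc_M; [exact: Zcyc_nat | exact: Zcyc_X].
  split; first by apply: Zcyc_D.
  rewrite psiD // psiM ?psin ?psiX //; [exact: Zcyc_nat | exact: Zcyc_X].
have bet0 : beta != 0.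
  by apply/negP => /eqP b0; move: hbT; rewrite b0 expr0n (gtn_eqF (T_gt0 hprim)) => /eqP; rewrite eq_sym oner_eq0.
have step1 : (nderivn 3 (Spoly alpha L)).[beta] = 0 <-> P A.
  rewrite (hker _ ZA) psiA -(deriv_eval alpha beta h2); split.
    by move=> ->; rewrite mul0r.
  by move/eqP; rewrite mulf_eq0 expf_eq0 (negbTE bet0) andbF orbF => /eqP.
have hcombo := combo hprim hq4 hzT hz1.
rewrite /= -/K -/chi -/A in hcombo.
have eq8 : forall X, X = - (8 * A) -> (I8P X <-> P A).
  move=> X ->; split; first exact: (@contract k P A ok k1 hPI ZA).
  move=> PA; exists [:: (-1, 8 * A)]; split.
    move=> ab; rewrite inE => /eqP -> /=; split; first exact: (Zcyc_int _ (-1)).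
    by exists A.
  by rewrite big_cons big_nil addr0 mulN1r.
rewrite step1.
have T4' := T4 hprim hq4; have cT := cardF_T hprim.
case: ifP => h8.
  apply: iff_sym; apply: eq8; rewrite -hcombo.
  suff -> : (-1 : algC) ^+ (#|F|.-1 %/ 4) = 1 by rewrite !mul1r.
  rewrite -signr_odd; suff -> : odd (#|F|.-1 %/ 4) = false by [].
  have : ((#|F|.-1 %/ 4) %% 2 = 0)%N by move/eqP: h8; lia.
  by rewrite modn2; case: odd.
apply: iff_sym; apply: eq8; rewrite -hcombo.
suff -> : (-1 : algC) ^+ (#|F|.-1 %/ 4) = -1 by rewrite /z4; ring.
rewrite -signr_odd; suff -> : odd (#|F|.-1 %/ 4) = true by rewrite expr1.
have : ((#|F|.-1 %/ 4) %% 2 = 1)%N by move/negbT/eqP: h8; lia.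
by rewrite modn2; case: odd.
Qed.
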